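(* There is an algorithm which, given a Lyndon word $y$ of length $n\ge 2$ over an arbitrary totally ordered alphabet, accessing the letters of $y$ only through pairwise letter comparisons, outputs the prefix standard permutation of $y$, i.e. the list of positions $j\in\{0,\dots,n-2\}$ sorted so that the corresponding prefixes $y[0\,..\,j]$ are in strictly increasing order for the infinite ordering $\prec$, and runs in time $O(n)$.
   Context: Words are finite sequences $y=y[0]\cdots y[n-1]$ over a totally ordered alphabet; $y[0\,..\,j]$ is the prefix of length $j+1$. Lexicographic order $<$: $u<v$ if $u$ is a proper prefix of $v$, or $u=ras$, $v=rbt$ with $a<b$ letters; it extends to infinite words. A Lyndon word is a non-empty word strictly smaller than each of its proper non-empty suffixes. Infinite ordering: for non-empty words $u,v$, $u\prec v$ iff $u^\infty<v^\infty$, or $u^\infty=v^\infty$ and $|u|>|v|$, where $u^\infty=uuu\cdots$. This is a strict total order on non-empty words. *)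

(* Defs.v *)
From mathcomp Require Import all_boot all_order.
Set Implicit Arguments. Unset Strict Implicit. Unset Printing Implicit Defensive.
Import Order.TTheory.

Section Words.
Context {d : Order.disp_t} {T : orderType d}.

Definition lexlt (u v : seq T) : Prop :=
  (exists w, w <> [::] /\ v = u ++ w) \/
  (exists r a b s t, u = r ++ a :: s /\ v = r ++ b :: t /\ (a < b)%O).

Definition lyndon (u : seq T) : Prop :=
  u <> [::] /\ forall k, 0 < k < size u -> lexlt u (drop k u).

Definition streamlt (a b : nat -> T) : Prop :=
  exists k, (forall i, i < k -> a i = b i) /\ (a k < b k)%O.

(* u^oo as a stream, for non-empty u = x :: _ (x is only a default). *)
Definition pow_inf (x : T) (u : seq T) : nat -> T :=
  fun i => nth x u (i %% size u).

Definition prec (u v : seq T) : Prop :=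
  match u, v with
  | x :: _, z :: _ =>
      streamlt (pow_inf x u) (pow_inf z v) \/
      ((forall i, pow_inf x u i = pow_inf z v i) /\ size v < size u)
  | _, _ => False
  end.

Definition prefix_std_perm (y : seq T) (p : seq nat) : Prop :=
  perm_eq p (iota 0 (size y).-1) /\
  forall i, i.+1 < size p ->
    prec (take (nth 0 p i).+1 y) (take (nth 0 p i.+1).+1 y).

End Words.

(* A comparison-based unit-cost RAM.                                   *)
(* Registers R[0..] and memory M[0..] hold naturals (all initially 0,   *)
(* except R[0] = n = |y|).  The input word is accessible only through   *)
(* the letter-comparison instruction ICmp.  Each executed instruction   *)
(* costs one time unit.  On halting, the output is M[0], ..., M[n-2].   *)

Inductive instr : Type :=
| IConst (r c : nat)
| IAdd   (r a b : nat)
| ISub   (r a b : nat)          (* R[r] := R[a] - R[b] (truncated)    *)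
| ILoad  (r a : nat)
| IStore (a r : nat)
| IJmp   (t : nat)
| IJlt   (a b t : nat)
| ICmp   (r a b : nat)          (* R[r] := 0,1,2 as y[R[a]] <,=,> y[R[b]];
                                   crashes if an index is >= n        *)
| IHalt.

Definition program := seq instr.

Record state := State { pc : nat; reg : nat -> nat; mem : nat -> nat }.

Definition upd (f : nat -> nat) (k v : nat) : nat -> nat :=
  fun i => if i == k then v else f i.

Definition init_state (n : nat) : state :=
  State 0 (upd (fun _ => 0) 0 n) (fun _ => 0).

Definition halted (P : program) (s : state) : Prop :=
  nth IHalt P (pc s) = IHalt /\ pc s < size P.

Section Exec.
Context {d : Order.disp_t} {T : orderType d}.

Definition cmp_letters (y : seq T) (i j : nat) : option nat :=
  match onth y i, onth y j with
  | Some a, Some b => Some (if (a < b)%O then 0 else if a == b then 1 else 2)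
  | _, _ => None
  end.

Definition step (P : program) (y : seq T) (s : state) : option state :=
  let R := reg s in let M := mem s in let nx := (pc s).+1 in
  if size P <= pc s then None else
  match nth IHalt P (pc s) with
  | IConst r c => Some (State nx (upd R r c) M)
  | IAdd r a b => Some (State nx (upd R r (R a + R b)) M)
  | ISub r a b => Some (State nx (upd R r (R a - R b)) M)
  | ILoad r a => Some (State nx (upd R r (M (R a))) M)
  | IStore a r => Some (State nx R (upd M (R a) (R r)))
  | IJmp t => Some (State t R M)
  | IJlt a b t => Some (State (if R a < R b then t else nx) R M)
  | ICmp r a b =>
      match cmp_letters y (R a) (R b) with
      | Some c => Some (State nx (upd R r c) M)
      | None => None
      end
  | IHalt => None
  end.

Fixpoint run (P : program) (y : seq T) (t : nat) : option state :=
  match t with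
  | 0 => Some (init_state (size y))
  | t'.+1 => match run P y t' with
             | Some s => step P y s
             | None => None
             end
  end.

Definition output (y : seq T) (s : state) : seq nat :=
  mkseq (mem s) (size y).-1.

End Exec.

(* Main.v *)
Require Import Defs.
From mathcomp Require Import all_boot all_order.
From mathcomp Require Import zify.
Set Implicit Arguments. Unset Strict Implicit. Unset Printing Implicit Defensive.
Import Order.TTheory.

Section Comb.
Context {d : Order.disp_t} {T : orderType d}.
Variable (x0 : T) (y : seq T).
Hypothesis Hly : lyndon y.
Local Notation n := (size y).
Local Notation "y .[ i ]" := (nth x0 y i).

Lemma lyn_mismatch dd e : 0 < dd < n -> dd + e < n ->
  (forall j, j < e -> y.[dd+j] = y.[j]) -> y.[dd+e] != y.[e] -> (y.[e] < y.[dd+e])%O.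
Proof.
move=> Hd He Hm Hne.
have [_ /(_ dd Hd)] := Hly.
case=> [[w [_ Hw]]|[r [a [b [s [t [Hu [Hv Hab]]]]]]]].
  have := congr1 size Hw; rewrite size_drop size_cat; lia.
have Hra : y.[size r] = a by rewrite Hu nth_cat ltnn subnn.
have Hrb : y.[dd + size r] = b by rewrite -nth_drop Hv nth_cat ltnn subnn.
have Hr : forall j, j < size r -> y.[j] = y.[dd+j].
  move=> j Hj; rewrite -nth_drop Hv Hu !nth_cat Hj //.
have Hneq : a != b by rewrite lt_neqAle in Hab; case/andP: Hab.
case: (ltngtP (size r) e) => Hc.
- by move: Hneq; rewrite -Hra -Hrb Hm // eqxx.
- by move: Hne; rewrite -Hr // eqxx.
- by rewrite -Hc Hra Hrb.
Qed.

Lemma unbordered m : 0 < m < n -> exists e, m + e < n /\ y.[m+e] != y.[e].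
Proof.
move=> Hm.
have [_ /(_ m Hm)] := Hly.
case=> [[w [_ Hw]]|[r [a [b [s [t [Hu [Hv Hab]]]]]]]].
  have := congr1 size Hw; rewrite size_drop size_cat; lia.
exists (size r); split.
  have := congr1 size Hv; rewrite size_drop size_cat /=; lia.
rewrite -nth_drop Hv Hu !nth_cat ltnn subnn /=.
by rewrite lt_neqAle in Hab; case/andP: Hab; rewrite eq_sym.
Qed.

Definition mis m := fun j => y.[m+j] != y.[j].
Definition f m := find (mis m) (iota 0 (n - m)).
Definition k m := m + f m.

Lemma f_lt m : 0 < m < n -> f m < n - m.
Proof.
move=> Hm; have [e [He1 He2]] := unbordered Hm.
have : has (mis m) (iota 0 (n - m)).
  apply/hasP; exists e => //; rewrite mem_iota; lia.
by rewrite has_find size_iota.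
Qed.

Lemma k_lt m : 0 < m < n -> k m < n.
Proof. move=> /f_lt; rewrite /k; lia. Qed.

Lemma k_ge m : m <= k m.
Proof. rewrite /k; lia. Qed.

Lemma kmatch m j : j < f m -> y.[m+j] = y.[j].
Proof.
move=> Hj; have Hs : f m <= n - m by have := find_size (mis m) (iota 0 (n-m)); rewrite size_iota.
have := before_find 0 Hj; rewrite nth_iota; last lia.
by rewrite /mis add0n => /negbFE/eqP.
Qed.

Lemma kmis m : 0 < m < n -> y.[k m] != y.[f m].
Proof.
move=> Hm; have H := f_lt Hm.
have Hh : has (mis m) (iota 0 (n - m)) by rewrite has_find size_iota.
have := nth_find 0 Hh; rewrite -/(f m) nth_iota; last lia.
by rewrite /mis add0n.
Qed.

Lemma period m i : 0 < m -> i < k m -> y.[i] = y.[i %% m].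
Proof.
move=> Hm; elim/ltn_ind: i => i IH Hi.
case: (ltnP i m) => Him; first by rewrite modn_small.
have -> : i = m + (i - m) by lia.
rewrite kmatch; last by rewrite /k in Hi; lia.
rewrite IH; [|lia|lia]. by rewrite modnDl.
Qed.

Lemma kmis_big m : 0 < m < n -> (y.[f m] < y.[k m])%O.
Proof.
move=> Hm; have H := f_lt Hm.
apply: lyn_mismatch; [lia|lia| |exact: kmis].
exact: kmatch.
Qed.

Lemma nesting m m' : 0 < m -> m < m' -> m' <= k m -> m' < n -> k m' <= k m.
Proof.
move=> H0 H1 H2 H3; have Hmn : 0 < m < n by lia.
have Ekm : k m = m + f m by []. have Ekm' : k m' = m' + f m' by [].
have Hfm := f_lt Hmn.
rewrite leqNgt; apply/negP => Hlt.
have Hfm' : k m - m' < f m' by lia.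
have Hkm : y.[k m - m'] = y.[k m].
  rewrite -(kmatch Hfm'); congr nth; lia.
have Hdd : y.[(m' - m) + (k m - m')] = y.[f m] by congr nth; lia.
have Hmatch : forall j, j < k m - m' -> y.[(m'-m) + j] = y.[j].
  move=> j Hj.
  have E1 : y.[m' + j] = y.[j] := kmatch (m:=m') (j:=j) ltac:(lia).
  have E2 : y.[m + (m'-m+j)] = y.[m'-m+j] := kmatch (m:=m) (j:=m'-m+j) ltac:(lia).
  rewrite -E2 -E1; congr nth; lia.
have Hmis : y.[(m'-m) + (k m - m')] != y.[k m - m'] by rewrite Hdd Hkm eq_sym kmis.
have H := lyn_mismatch (dd:=m'-m) (e:=k m - m') ltac:(lia) ltac:(lia) Hmatch Hmis.
rewrite Hdd Hkm in H.
have H' := kmis_big Hmn.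
by have := lt_trans H H'; rewrite ltxx.
Qed.

Lemma pow_inf_take z m i : 0 < m <= n -> pow_inf z (take m y) i = y.[i %% m].
Proof.
move=> Hm; rewrite /pow_inf size_take.
have -> : (if m < n then m else n) = m by case: ltnP => //; lia.
have Hi : i %% m < m by rewrite ltn_mod; lia.
rewrite nth_take //; apply: set_nth_default; lia.
Qed.

Lemma prec_take m m' : 0 < m <= n -> 0 < m' <= n ->
  (streamlt (fun i => y.[i %% m]) (fun i => y.[i %% m']) \/
   ((forall i, y.[i %% m] = y.[i %% m']) /\ m' < m)) -> prec (take m y) (take m' y).
Proof.
move=> Hm Hm' H.
have Sm : size (take m y) = m by rewrite size_take; case: ltnP => //; lia.
have Sm' : size (take m' y) = m' by rewrite size_take; case: ltnP => //; lia.
rewrite /prec; case E: (take m y) => [|a u]; first by move: Sm; rewrite E /=; lia.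
case E': (take m' y) => [|b v]; first by move: Sm'; rewrite E' /=; lia.
rewrite -E -E' -Sm -Sm'.
rewrite Sm Sm'.
case: H => [[K [HK1 HK2]]|[HK1 HK2]]; [left; exists K; split|right; split] => //.
- by move=> i Hi; rewrite !pow_inf_take // HK1.
- by rewrite !pow_inf_take.
- by move=> i; rewrite !pow_inf_take // HK1.
- by rewrite Sm Sm'.
Qed.

Lemma ruleA m m' : 0 < m -> m < m' -> m' < n -> k m < m' ->
  prec (take m y) (take m' y).
Proof.
move=> H0 H1 H2 H3; have Hmn : 0 < m < n by lia.
have Ekm : k m = m + f m by [].
apply: prec_take; [lia|lia|left; exists (k m); split].
  move=> i Hi; rewrite -period //; rewrite modn_small //; lia.
rewrite [k m %% m']modn_small // Ekm modnDl -period; last lia; last lia.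
by rewrite -Ekm kmis_big.
Qed.

Lemma ruleB m m' : 0 < m -> m < m' -> m' < n -> m' <= k m ->
  prec (take m' y) (take m y).
Proof.
move=> H0 H1 H2 H3; have Hmn : 0 < m < n by lia.
have Ekm : k m = m + f m by [].
set dd := m' - m. have Edd : dd = m' - m by [].
have Per : forall i, i < m' -> y.[i] = y.[i %% m] by move=> i Hi; apply: period; lia.
have Mod : forall j, (m' + j) %% m = (dd + j) %% m.
  move=> j; have -> : m' + j = m + (dd + j) by lia.
  by rewrite modnDl.
set g := find (fun j => y.[dd + j] != y.[j]) (iota 0 m).
have Hg : g <= m by have := find_size (fun j => y.[dd + j] != y.[j]) (iota 0 m); rewrite size_iota.
have Bef : forall j, j < g -> y.[dd + j] = y.[j].
  move=> j Hj; have := before_find 0 Hj; rewrite nth_iota; last lia.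
  by rewrite add0n => /negbFE/eqP.
case: (ltnP g m) => Hgm.
-
  have Hh : has (fun j => y.[dd + j] != y.[j]) (iota 0 m) by rewrite has_find size_iota.
  have Mis : y.[dd + g] != y.[g].
    by have := nth_find 0 Hh; rewrite -/g nth_iota ?add0n; last lia.
  have Lt := lyn_mismatch (dd:=dd) (e:=g) ltac:(lia) ltac:(lia) Bef Mis.
  apply: prec_take; [lia|lia|left; exists (m' + g); split].
  + move=> i Hi; case: (ltnP i m') => Him.
      by rewrite [i %% m']modn_small // -Per.
    have -> : i = m' + (i - m') by lia.
    rewrite Mod -Per; last lia.
    rewrite modnDl modn_small; last lia.
    by rewrite Bef //; lia.
  + rewrite Mod -Per; last lia.
    by rewrite modnDl modn_small; last lia.
-
  have Bef' : forall j, j < m -> y.[dd + j] = y.[j] by move=> j Hj; apply: Bef; lia.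
  have Yd : forall i, y.[(i + dd) %% m] = y.[i %% m].
    move=> i; rewrite -modnDml -Per; last first.
      have : i %% m < m by rewrite ltn_mod.
      rewrite /dd; lia.
    by rewrite addnC Bef' // ltn_mod.
  have Ym' : forall i, y.[(i + m') %% m] = y.[i %% m].
    move=> i; have -> : i + m' = (i + dd) + m by rewrite /dd; lia.
    by rewrite modnDr Yd.
  have Yq : forall q r, y.[(r + q * m') %% m] = y.[r %% m].
    move=> q r; elim: q => [|q IH]; first by rewrite mul0n addn0.
    by rewrite mulSn addnCA addnC Ym' IH.
  apply: prec_take; [lia|lia|right; split => //].
  move=> i; rewrite {2}(divn_eq i m') addnC Yq -Per //.
  by rewrite ltn_mod; lia.
Qed.

Definition ltk a b := (k a < k b) || ((k a == k b) && (b < a)).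

Lemma prec_ltk a b : 0 < a < n -> 0 < b < n -> ltk a b ->
  prec (take a y) (take b y).
Proof.
move=> Ha Hb; rewrite /ltk.
case: (ltngtP a b) => Hab.
- case: (ltnP (k a) b) => Hkb; first by move=> _; apply: ruleA; lia.
  have := nesting (m:=a) (m':=b) ltac:(lia) Hab Hkb ltac:(lia).
  move=> H /orP [H4 | /andP [H4 H5]]; lia.
- case: (ltnP (k b) a) => Hka.
    have := k_ge a; move=> H /orP [H4 | /andP [/eqP H4 H5]]; lia.
  by move=> _; apply: ruleB; lia.
- by rewrite Hab !ltnn andbF.
Qed.

Definition prog : program := [::
  IConst 5 1; IConst 1 1; IAdd 3 0 9; IJlt 1 0 5; IJmp 23;
  IStore 3 1; IAdd 3 3 5; IJlt 0 3 9; IJmp 21; ISub 6 3 5;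
  ILoad 7 6; ISub 8 1 7; ICmp 6 1 8; IJlt 6 5 16; IJlt 5 6 16;
  IJmp 21; ISub 8 7 5; IStore 4 8; IAdd 4 4 5; ISub 3 3 5;
  IJmp 7; IAdd 1 1 5; IJmp 3; IHalt].

Fixpoint steps (t : nat) (s : state) : option state :=
  match t with
  | 0 => Some s
  | t'.+1 => match step prog y s with Some s' => steps t' s' | None => None end
  end.

Lemma steps_add a b s : steps (a + b) s =
  match steps a s with Some s' => steps b s' | None => None end.
Proof.
elim: a s => [|a IH] s //=; case: (step prog y s) => //.
Qed.

Lemma run_steps t : run prog y t = steps t (init_state n).
Proof.
elim: t => [|t IH] //.
have -> : steps t.+1 (init_state n) = steps (t + 1) (init_state n) by rewrite addn1.
rewrite steps_add -IH /=.
by case: (run prog y t) => //= s; case: (step prog y s).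
Qed.

Definition reach s (Q : nat -> state -> Prop) :=
  exists t s', steps t s = Some s' /\ Q t s'.

Lemma reach_step s s1 Q : step prog y s = Some s1 ->
  reach s1 (fun t s' => Q t.+1 s') -> reach s Q.
Proof. by move=> H [t [s' [H1 H2]]]; exists t.+1, s'; rewrite /= H. Qed.

Lemma reach_now s (Q : nat -> state -> Prop) : Q 0 s -> reach s Q.
Proof. by exists 0, s. Qed.

Lemma reach_trans s Q :
  reach s (fun t s' => reach s' (fun t' s'' => Q (t + t') s'')) -> reach s Q.
Proof.
move=> [t [s' [H1 [t' [s'' [H2 H3]]]]]]; exists (t + t'), s''.
by rewrite steps_add H1.
Qed.

Lemma reach_mono s (Q Q' : nat -> state -> Prop) :
  (forall t s', Q t s' -> Q' t s') -> reach s Q -> reach s Q'.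
Proof. by move=> H [t [s' [H1 H2]]]; exists t, s'; split => //; apply: H. Qed.

Lemma onth_in i : i < n -> onth y i = Some y.[i].
Proof. by move=> Hi; rewrite onthE (nth_map x0). Qed.

Lemma upd_eq (g : nat -> nat) a v : upd g a v a = v.
Proof. by rewrite /upd eqxx. Qed.
Lemma upd_ne (g : nat -> nat) a v b : b != a -> upd g a v b = g b.
Proof. by rewrite /upd => /negbTE ->. Qed.

Arguments upd f k v i /.
Ltac stp := apply: reach_step; [rewrite /step /=; reflexivity|].
Ltac stpc H := apply: reach_step; [rewrite /step /= H; reflexivity|].


Record InvO (i : nat) (st out : seq nat) : Prop := {
  o_i : 0 < i <= n;
  o_st : pairwise ltn st;
  o_stm : forall m, m \in st -> 0 < m < i /\ i <= k m;
  o_stc : forall m, 0 < m < i -> i <= k m -> m \in st;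
  o_out : pairwise ltk out;
  o_outm : forall x, x \in out -> 0 < x < i /\ k x < i;
  o_outc : forall m, 0 < m -> k m < i -> m \in out }.

Record InvI (i : nat) (st out : seq nat) : Prop := {
  i_i : 0 < i < n;
  i_st : pairwise ltn st;
  i_stm : forall m, m \in st -> 0 < m <= i /\ i <= k m;
  i_stc : forall m, 0 < m <= i -> i < k m -> m \in st;
  i_out : pairwise ltk out;
  i_outm : forall x, x \in out -> 0 < x <= i /\ k x <= i;
  i_outlt : forall x, x \in out -> k x = i -> forall m, m \in st -> m < x;
  i_outc : forall m, 0 < m -> k m < i -> m \in out;
  i_all : forall m, 0 < m <= i -> k m = i -> m \in st \/ m \in out }.

Lemma ltk_irr : irreflexive ltk.
Proof. by move=> a; rewrite /ltk !ltnn andbF. Qed.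

Lemma push_inv i st out : InvO i st out -> i < n -> InvI i (rcons st i) out.
Proof.
case=> Hi Hst Hstm Hstc Hout Houtm Houtc Hin.
have Hki := k_ge i.
constructor => //.
- lia.
- rewrite pairwise_rcons Hst andbT; apply/allP => m /Hstm; lia.
- move=> m; rewrite mem_rcons inE => /orP [/eqP ->|/Hstm]; lia.
- move=> m Hm Hk; rewrite mem_rcons inE; case: (ltnP m i) => Hmi.
    by rewrite Hstc ?orbT //; lia.
  have -> : m = i by lia.
  by rewrite eqxx.
- move=> x Hx; have := Houtm x Hx; lia.
- move=> x Hx Hk; have := Houtm x Hx; lia.
- move=> m Hm Hk; rewrite mem_rcons inE; case: (ltnP m i) => Hmi.
    by left; rewrite Hstc ?orbT //; lia.
  have -> : m = i by lia.
  by left; rewrite eqxx.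
Qed.

Lemma exit_empty i out : InvI i [::] out -> InvO i.+1 [::] out.
Proof.
case=> Hi Hst Hstm Hstc Hout Houtm Houtlt Houtc Hall.
constructor => //.
- lia.
- move=> m Hm Hk; case: (ltnP (k m) i) => Hkm; first exact: Houtc.
  have := k_ge m => Hg.
  by case: (Hall m ltac:(lia) ltac:(lia)).
Qed.

Lemma stack_gt i st t out : InvI i (rcons st t) out -> i < k t ->
  forall m, m \in rcons st t -> i < k m.
Proof.
case=> Hi Hst Hstm Hstc Hout Houtm Houtlt Houtc Hall Hkt m Hm.
rewrite mem_rcons inE in Hm; case/orP: Hm => [/eqP -> //|Hm].
have Hmt : m < t.
  by move: Hst; rewrite pairwise_rcons => /andP [/allP /(_ m Hm)].
have [H1 H2] := Hstm m ltac:(by rewrite mem_rcons inE Hm orbT).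
have [H3 H4] := Hstm t ltac:(by rewrite mem_rcons inE eqxx).
rewrite ltn_neqAle H2 andbT; apply/eqP => Ekm.
have := nesting (m:=m) (m':=t) ltac:(lia) Hmt ltac:(lia) ltac:(lia); lia.
Qed.

Lemma exit_match i st t out : InvI i (rcons st t) out -> i < k t ->
  InvO i.+1 (rcons st t) out.
Proof.
move=> HI Hkt; have Hgt := stack_gt HI Hkt.
case: HI => Hi Hst Hstm Hstc Hout Houtm Houtlt Houtc Hall.
constructor => //.
- lia.
- move=> m Hm; have := Hstm m Hm; have := Hgt m Hm; lia.
- move=> m Hm Hk; case: (ltnP (k m) i) => Hkm; first exact: Houtc.
  have := k_ge m => Hg.
  case: (Hall m ltac:(lia) ltac:(lia)) => // /Hgt; lia.
Qed.

Lemma pop_inv i st t out : InvI i (rcons st t) out -> k t <= i ->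
  InvI i st (rcons out t) /\ k t = i.
Proof.
case=> Hi Hst Hstm Hstc Hout Houtm Houtlt Houtc Hall Hkt.
have Htin : t \in rcons st t by rewrite mem_rcons inE eqxx.
have [Ht1 Ht2] := Hstm t Htin.
have Ekt : k t = i by lia.
have Hlt : forall m, m \in st -> m < t.
  by move=> m Hm; move: Hst; rewrite pairwise_rcons => /andP [/allP /(_ m Hm)].
have Hsub : forall m, m \in st -> m \in rcons st t by move=> m Hm; rewrite mem_rcons inE Hm orbT.
split => //; constructor => //.
- by move: Hst; rewrite pairwise_rcons => /andP [].
- by move=> m /Hsub /Hstm.
- move=> m Hm Hk; have := Hstc m Hm Hk; rewrite mem_rcons inE => /orP [/eqP E|//].
  by move: Hk; rewrite E; lia.
- rewrite pairwise_rcons Hout andbT; apply/allP => x Hx.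
  have [H1 H2] := Houtm x Hx; rewrite /ltk Ekt.
  case: (ltnP (k x) i) => //= Hkx.
  have Ekx : k x = i by lia.
  by rewrite Ekx eqxx /=; apply: (Houtlt x Hx Ekx).
- move=> x; rewrite mem_rcons inE => /orP [/eqP ->|/Houtm //]; lia.
- move=> x; rewrite mem_rcons inE => /orP [/eqP -> _ m /Hlt //|Hx Hkx m Hm].
  by apply: (Houtlt x Hx Hkx); apply: Hsub.
- by move=> m Hm Hk; rewrite mem_rcons inE Houtc ?orbT.
- move=> m Hm Hk; case: (Hall m Hm Hk).
    rewrite mem_rcons inE => /orP [/eqP ->|->]; last by left.
    by right; rewrite mem_rcons inE eqxx.
  by move=> Hm2; right; rewrite mem_rcons inE Hm2 orbT.
Qed.

Lemma size_out_lt i st out : InvI i st out -> size out < n.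
Proof.
case=> Hi Hst Hstm Hstc Hout Houtm Houtlt Houtc Hall.
have Hu : uniq out := pairwise_uniq ltk_irr Hout.
have : size out <= size (iota 1 i).
  apply: uniq_leq_size => // x /Houtm [H1 _]; rewrite mem_iota; lia.
rewrite size_iota; lia.
Qed.

Lemma match_iff i t : 0 < t <= i -> i < n -> i <= k t ->
  (y.[i - t] == y.[i]) = (i < k t).
Proof.
move=> Ht Hi Hk; have Htn : 0 < t < n by lia.
have Ek : k t = t + f t by [].
case: (ltnP i (k t)) => Hc.
  apply/eqP; rewrite -(kmatch (m:=t) (j:=i-t)); last lia.
  by congr nth; lia.
have Efi : i - t = f t by lia.
have Eki : i = k t by lia.
rewrite Efi Eki; apply/negbTE; rewrite eq_sym; exact: kmis.
Qed.


Record Conc (i : nat) (st out : seq nat) (R M : nat -> nat) : Prop := {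
  c0 : R 0 = n; c1 : R 1 = i; c3 : R 3 = n + size st; c4 : R 4 = size out;
  c5 : R 5 = 1;
  cst : forall j, j < size st -> M (n + j) = nth 0 st j;
  cout : forall j, j < size out -> M j = (nth 0 out j).-1 }.

Lemma reach_seq s (Q1 Q : nat -> state -> Prop) : reach s Q1 ->
  (forall t s', Q1 t s' -> reach s' (fun t' s'' => Q (t + t') s'')) -> reach s Q.
Proof.
move=> [t [s' [H1 H2]]] H; have [t' [s'' [H3 H4]]] := H t s' H2.
by exists (t + t'), s''; rewrite steps_add H1.
Qed.

Lemma seg_pop i st t out R M : R 0 = n -> R 1 = i -> R 3 = n + size (rcons st t) ->
  R 4 = size out -> R 5 = 1 -> R 7 = t ->
  (forall j, j < size (rcons st t) -> M (n+j) = nth 0 (rcons st t) j) ->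
  (forall j, j < size out -> M j = (nth 0 out j).-1) -> size out < n ->
  reach (State 16 R M) (fun tt s => tt = 5 /\ pc s = 7 /\
     Conc i st (rcons out t) (reg s) (Defs.mem s)).
Proof.
move=> H0 H1 H3 H4 H5 H7 Hst Hout Hsz.
do 5 stp. apply: reach_now; split => //; split => //.
constructor => /=.
- by rewrite H0.
- by rewrite H1.
- by rewrite H3 H5 size_rcons; lia.
- by rewrite H4 H5 size_rcons addn1.
- by rewrite H5.
- move=> j Hj; rewrite H4 ifF; last by apply/eqP; lia.
  by rewrite Hst ?size_rcons ?nth_rcons ?Hj //; lia.
- move=> j; rewrite size_rcons nth_rcons H4 H7 H5 subn1 => Hj.
  case: (ltnP j (size out)) => Hjo.
    by rewrite ifF ?Hout //; apply/eqP; lia.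
  have -> : j = size out by lia.
  by rewrite eqxx.
Qed.


Definition QI i (st0 : seq nat) := fun tt s => exists st' out', pc s = 21 /\ InvO i.+1 st' out' /\
  Conc i st' out' (reg s) (Defs.mem s) /\ tt + 12 * size st' <= 12 * size st0 + 8.

Lemma inner i st : forall out R M, InvI i st out -> Conc i st out R M ->
  reach (State 7 R M) (QI i st).
Proof.
elim/last_ind: st => [|st t IH] out R M HI HC.
  have H : (R 0 < R 3) = false by rewrite (c0 HC) (c3 HC) addn0 ltnn.
  stpc H. stp. apply: reach_now.
  exists [::], out; split => //; split; first exact: exit_empty HI.
  by split => //.
have H : (R 0 < R 3) = true by rewrite (c0 HC) (c3 HC) size_rcons; lia.
stpc H. stp. stp. stp.
have Etop : M (R 3 - R 5) = t.
  rewrite (c3 HC) (c5 HC) size_rcons addnS subn1 /= (cst HC); last by rewrite size_rcons.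
  by rewrite nth_rcons ltnn eqxx.
rewrite Etop (c1 HC).
have Htin : t \in rcons st t by rewrite mem_rcons inE eqxx.
have [Ht1 Ht2] := i_stm HI Htin.
have Hin := i_i HI.
have Hcmp : forall c, c = (if (y.[i] < y.[i - t])%O then 0 else if y.[i] == y.[i - t] then 1 else 2) ->
   cmp_letters y i (i - t) = Some c.
  by move=> c ->; rewrite /cmp_letters !onth_in //; lia.
have HR5 := c5 HC.
case: (ltnP i (k t)) => Hc.
- have E := match_iff (i:=i) (t:=t) ltac:(lia) ltac:(lia) Ht2.
  rewrite Hc in E; move/eqP: E => E.
  have Hc1 := Hcmp 1 ltac:(by rewrite E ltxx eqxx).
  apply: reach_step; [rewrite /step /= (c1 HC) Hc1; reflexivity|]. stpc HR5. stpc HR5. stp. apply: reach_now.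
  exists (rcons st t), out; split => //; split; first exact: exit_match HI Hc.
  split; last lia.
  by case: HC => *; constructor.
- have [HI' Ekt] := pop_inv HI Hc.
  have E := match_iff (i:=i) (t:=t) ltac:(lia) ltac:(lia) Ht2.
  rewrite Ekt ltnn in E.
  have Hsz := size_out_lt HI'.
  rewrite size_rcons in Hsz.
  have Hpop : forall s1 tt0, tt0 <= 7 -> pc s1 = 16 -> reg s1 0 = n -> reg s1 1 = i ->
     reg s1 3 = R 3 -> reg s1 4 = R 4 -> reg s1 5 = 1 -> reg s1 7 = t -> Defs.mem s1 = M ->
     reach s1 (fun tt s => QI i (rcons st t) (tt0 + tt) s).
    move=> [p1 R1 M1] tt0 Htt /= -> H0 H1 H3 H4 H5 H7 ->.
    apply: reach_seq.
      apply: (seg_pop (i:=i) (st:=st) (t:=t) (out:=out)) => //.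
      + by rewrite H3 (c3 HC).
      + by rewrite H4 (c4 HC).
      + exact: (cst HC).
      + exact: (cout HC).
      + lia.
    move=> tt1 [p2 R2 M2] [-> [/= -> HC2]].
    have := IH (rcons out t) R2 M2 HI' HC2.
    apply: reach_mono => tt2 s2 [st' [out' [Hp [HO [HC' Htt']]]]].
    exists st', out'; do 3! (split => //).
    rewrite size_rcons in Htt' *; lia.
  case Hlt: (y.[i] < y.[i - t])%O.
  + have Hc0 := Hcmp 0 ltac:(by rewrite Hlt).
    apply: reach_step; [rewrite /step /= (c1 HC) Hc0; reflexivity|]. stpc HR5.
    apply: (Hpop _ 6) => //=; [exact: (c0 HC)|exact: (c1 HC)].
  + have Hne : (y.[i] == y.[i - t]) = false by rewrite eq_sym E.
    have Hc2 := Hcmp 2 ltac:(by rewrite Hlt Hne).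
    apply: reach_step; [rewrite /step /= (c1 HC) Hc2; reflexivity|]. stpc HR5. stpc HR5.
    apply: (Hpop _ 7) => //=; [exact: (c0 HC)|exact: (c1 HC)].
Qed.


Lemma map_pred_iota m : map predn (iota 1 m) = iota 0 m.
Proof.
rewrite (iotaDl 1 0) -map_comp; apply: map_id_in => x _ /=; by [].
Qed.

Lemma final_perm st out R M : InvO n st out -> Conc n st out R M ->
  prefix_std_perm y (mkseq M n.-1).
Proof.
move=> HO HC.
have Hmem : out =i iota 1 n.-1.
  move=> x; rewrite mem_iota; apply/idP/idP.
    move/(o_outm HO) => [H1 _]; lia.
  move=> Hx; apply: (o_outc HO); first lia.
  apply: k_lt; lia.
have Hperm : perm_eq out (iota 1 n.-1).
  apply: uniq_perm => //; [exact: pairwise_uniq ltk_irr (o_out HO)|exact: iota_uniq].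
have Hsz : size out = n.-1 by rewrite (perm_size Hperm) size_iota.
have Hmk : mkseq M n.-1 = map predn out.
  apply: (eq_from_nth (x0:=0)); first by rewrite size_mkseq size_map Hsz.
  move=> j; rewrite size_mkseq => Hj.
  by rewrite nth_mkseq // (nth_map 0) ?Hsz // (cout HC) ?Hsz.
have Hpos : forall j, j < size out -> 0 < nth 0 out j < n.
  move=> j Hj; have [] := o_outm HO (mem_nth 0 Hj); set x := nth 0 out j; lia.
rewrite Hmk; split.
  by rewrite -map_pred_iota; apply: perm_map.
move=> j; rewrite size_map => Hj.
rewrite !(nth_map 0) //; last lia.
have H1 := Hpos j ltac:(lia); have H2 := Hpos j.+1 Hj.
rewrite !prednK; [|lia|lia].
apply: prec_ltk => //.
have /pairwiseP P := o_out HO.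
by apply: P; rewrite ?inE //; lia.
Qed.

Definition QO i (st0 : seq nat) := fun tt s => halted prog s /\
  prefix_std_perm y (output y s) /\ tt <= 25 * (n - i) + 12 * size st0 + 2.

Lemma outer r : forall i st out R M, n - i = r -> InvO i st out ->
  Conc i st out R M -> reach (State 3 R M) (QO i st).
Proof.
elim: r => [|r IH] i st out R M Hr HO HC.
  have Hi : i = n by have := o_i HO; lia.
  have H : (R 1 < R 0) = false by rewrite (c0 HC) (c1 HC) Hi ltnn.
  stpc H. stp. apply: reach_now.
  split; first by [].
  split; last lia.
  rewrite /output /=; move: HO HC; rewrite Hi => HO HC; exact: final_perm HO HC.
have Hin : i < n by lia.
have H : (R 1 < R 0) = true by rewrite (c0 HC) (c1 HC).
stpc H. stp. stp.
have HI := push_inv HO Hin.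
apply: reach_seq.
  apply: (inner (out:=out) HI); constructor => /=.
  - exact: (c0 HC).
  - exact: (c1 HC).
  - by rewrite (c3 HC) (c5 HC) size_rcons addn1 addnS.
  - exact: (c4 HC).
  - exact: (c5 HC).
  - move=> j; rewrite size_rcons nth_rcons (c3 HC) (c1 HC) => Hj.
    case: (ltnP j (size st)) => Hjs.
      by rewrite ifF ?(cst HC) //; apply/eqP; lia.
    have -> : j = size st by lia.
    by rewrite !eqxx.
  - move=> j Hj; rewrite (c3 HC) ifF ?(cout HC) //; apply/eqP.
    have := size_out_lt HI; lia.
move=> tt1 [p1 R1 M1] [st' [out' [/= -> [HO' [HC' Htt]]]]].
stp. stp.
have := IH i.+1 st' out' (upd R1 1 (R1 1 + R1 5)) M1 ltac:(lia) HO'.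
have HC'' : Conc i.+1 st' out' (upd R1 1 (R1 1 + R1 5)) M1.
  case: HC' => *; constructor => //=; by [lia| ].
move=> /(_ HC''); apply: reach_mono => tt2 s2 [Hh [Hp Ht]].
split => //; split => //.
rewrite size_rcons in Htt; lia.
Qed.


Lemma main_sec : 2 <= n -> exists t s, t <= 30 * n /\ run prog y t = Some s /\
  halted prog s /\ prefix_std_perm y (output y s).
Proof.
move=> Hn.
have : reach (init_state n) (fun tt s => halted prog s /\ prefix_std_perm y (output y s)
   /\ tt <= 30 * n).
  rewrite /init_state. stp. stp. stp.
  apply: reach_mono; last first.
    apply: (outer (r := n - 1) (i:=1) (st:=[::]) (out:=[::])) => //.
      by constructor => //; try lia; move=> m Hm Hk; exfalso; have := k_ge m; lia.
  move=> tt s [Hh [Hp Ht]]; split => //; split => //; rewrite /= in Ht; lia.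
move=> [t [s [Hs [Hh [Hp Ht]]]]]; exists t, s; rewrite run_steps; by [].
Qed.

End Comb.

Theorem mainTheorem3 :
  exists (P : program) (C : nat),
    forall (d : Order.disp_t) (T : orderType d) (y : seq T),
      lyndon y -> 2 <= size y ->
      exists (t : nat) (s : state),
        t <= C * size y /\ run P y t = Some s /\ halted P s /\
        prefix_std_perm y (output y s).
Proof.
exists prog, 30 => d T y Hly Hn.
case: y Hly Hn => [|x0 y'] Hly Hn; first by [].
exact: (main_sec x0 Hly Hn).
Qed.
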